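(* Let $G$ be a group with identity $1_G$ and inverse map $\pi:G\to G$, $\pi(g)=g^{-1}$. Suppose $B_1,B_2:G\to G$ are maps such that $(G,B_1,B_2)$ is a Rota-Baxter system of groups and $B_1(1_G)=B_2(1_G)=1_G$. Let $\widetilde{B_1},\widetilde{B_2}:\mathbb{F}[G]\to\mathbb{F}[G]$ be the unique linear maps extending $B_1$ and $\pi\circ B_2$ respectively, i.e. $\widetilde{B_1}(\sum\alpha_i g_i)=\sum\alpha_i B_1(g_i)$ and $\widetilde{B_2}(\sum\alpha_i g_i)=\sum \alpha_i B_2(g_i)^{-1}$. Then $(\mathbb{F}[G],\widetilde{B_1},\widetilde{B_2})$ is a Rota-Baxter system of Hopf algebras.
   Context: $\mathbb{F}$ is a field of characteristic $0$. $\mathbb{F}[G]$ is the group algebra with its standard Hopf algebra structure ($\Delta(g)=g\otimes g$, $\epsilon(g)=1$, $S(g)=g^{-1}$ for $g\in G$). A Rota-Baxter system of groups is a group $G$ with maps $B_1,B_2:G\to G$ such that for all $a,b\in G$: $B_1(a)B_1(b)=B_1(B_1(a)\,b\,B_2(a))$ and $B_2(b)B_2(a)=B_2(B_1(a)\,b\,B_2(a))$. Sweedler notation $\Delta(a)=a_1\otimes a_2$. A Rota-Baxter system of Hopf algebras is a triple $(H,B_1,B_2)$ where $(H,\cdot,1,\Delta,\epsilon,S)$ is a cocommutative Hopf algebra and $B_1,B_2:H\to H$ are coalgebra homomorphisms (i.e. $\Delta(B_i(a))=B_i(a_1)\otimes B_i(a_2)$, $\epsilon(B_i(a))=\epsilon(a)$)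 with $B_1(1)=B_2(1)=1$ such that for all $a,b\in H$: $B_1(a)B_1(b)=B_1(B_1(a_1)\,b\,S(B_2(a_2)))$ and $B_2(a)B_2(b)=B_2(B_1(a_1)\,b\,S(B_2(a_2)))$. *)

(* Defs.v *)
(* The group algebra F[G] of an arbitrary (possibly infinite)
   group G is represented by multinomials' {malg F[G]}: finitely supported
   functions G -> F, i.e. the free F-vector space on G (as an lmodType).
   Its algebra / Hopf structure is defined below by hand from the group law
   (monalg's own ring structure needs a "monomType", which excludes groups). *)
From HB Require Import structures.
From mathcomp Require Import all_boot all_order all_algebra.
From mathcomp Require Import finmap.
From mathcomp.multinomials Require Import monalg.

Set Implicit Arguments.
Unset Strict Implicit.
Unset Printing Implicit Defensive.

Import GRing.Theory.
Local Open Scope ring_scope.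
Local Open Scope fset_scope.

Section GroupAlgebra.
Variables (F : fieldType) (G : choiceType).
Variables (mul : G -> G -> G) (one : G) (inv : G -> G).

Notation H := {malg F[G]}.
Notation H2 := {malg F[(G * G)%type]}.  (* F[G x G] = F[G] (x) F[G] *)

Definition gbase (g : G) : H := << g >>.

Definition galg_mul (a b : H) : H :=
  \sum_(x <- msupp a) \sum_(y <- msupp b) << a@_x * b@_y *g mul x y >>.

Definition galg_one : H := << one >>.

Definition lin_ext (f : G -> G) (a : H) : H :=
  \sum_(x <- msupp a) << a@_x *g f x >>.

Definition galg_comul (a : H) : H2 :=
  \sum_(x <- msupp a) << a@_x *g (x, x) >>.

Definition galg_counit (a : H) : F := \sum_(x <- msupp a) a@_x.

Definition galg_antipode (a : H) : H := lin_ext inv a.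

Definition gtens (u v : H) : H2 :=
  \sum_(x <- msupp u) \sum_(y <- msupp v) << u@_x * v@_y *g (x, y) >>.

(* the linear map F[G] (x) F[G] -> V induced by a bilinear map phi
   (universal property of the tensor product): x (x) y |-> phi x y *)
Definition tens_lift (V : lmodType F) (phi : H -> H -> V) (t : H2) : V :=
  \sum_(p <- msupp t) t@_p *: phi (gbase p.1) (gbase p.2).

Definition RB_system_group (B1 B2 : G -> G) : Prop :=
  (forall a b, mul (B1 a) (B1 b) = B1 (mul (mul (B1 a) b) (B2 a))) /\
  (forall a b, mul (B2 b) (B2 a) = B2 (mul (mul (B1 a) b) (B2 a))).

(* (F[G], B1, B2) is a Rota-Baxter system of Hopf algebras, F[G] carrying
   its standard (cocommutative) Hopf algebra structure.
   Sweedler expressions f(a_1, a_2) are written tens_lift f (Delta a). *)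
Definition coalg_hom (B : H -> H) : Prop :=
  [/\ linear B,
      forall a, galg_comul (B a) =
                tens_lift (fun x y => gtens (B x) (B y)) (galg_comul a)
    & forall a, galg_counit (B a) = galg_counit a].

Definition RB_system_Hopf (B1 B2 : H -> H) : Prop :=
  [/\ coalg_hom B1, coalg_hom B2,
      B1 galg_one = galg_one /\ B2 galg_one = galg_one,
      forall a b, galg_mul (B1 a) (B1 b) =
        B1 (tens_lift (fun x y => galg_mul (galg_mul (B1 x) b)
                                           (galg_antipode (B2 y)))
                      (galg_comul a))
    & forall a b, galg_mul (B2 a) (B2 b) =
        B2 (tens_lift (fun x y => galg_mul (galg_mul (B1 x) b)
                                           (galg_antipode (B2 y)))
                      (galg_comul a))].

End GroupAlgebra.

(* Main.v *)
Require Import Defs.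
From HB Require Import structures.
From mathcomp Require Import all_boot all_order all_algebra.
From mathcomp Require Import finmap.
From mathcomp.multinomials Require Import monalg.
Import GRing.Theory.
Local Open Scope ring_scope.

Set Implicit Arguments.
Unset Strict Implicit.
Section Lin.
Variable F : fieldType.

Definition lin (U V : lmodType F) (f : U -> V) :=
  forall c u v, f (c *: u + v) = c *: f u + f v.

Lemma lin0 (U V : lmodType F) (f : U -> V) : lin f -> f 0 = 0.
Proof.
move=> hf; have := hf 1 0 0; rewrite scaler0 addr0 scale1r.
by move/(congr1 (fun z => z - f 0)); rewrite addrK subrr => <-.
Qed.

Lemma lin_sum (U V : lmodType F) (f : U -> V) (I : Type) (s : seq I) c u :
  lin f -> f (\sum_(x <- s) c x *: u x) = \sum_(x <- s) c x *: f (u x).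
Proof.
move=> hf; elim: s => [|x s IH]; first by rewrite !big_nil lin0.
by rewrite !big_cons hf IH.
Qed.

Lemma lin_comp (U V W : lmodType F) (f : V -> W) (g : U -> V) :
  lin f -> lin g -> lin (fun x => f (g x)).
Proof. by move=> hf hg c u v; rewrite hg hf. Qed.

Variable K : choiceType.
Notation H := {malg F[K]}.

Definition E (V : lmodType F) (phi : K -> V) (a : H) : V :=
  \sum_(x <- msupp a) a@_x *: phi x.

Lemma Ew (V : lmodType F) (phi : K -> V) (a : H) d :
  (msupp a `<=` d)%fset -> E phi a = \sum_(x <- d) a@_x *: phi x.
Proof.
move=> le; rewrite /E (big_fset_incl _ le) // => x _ /mcoeff_outdom ->.
by rewrite scale0r.
Qed.

Lemma lin_E (V : lmodType F) (phi : K -> V) : lin (E phi).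
Proof.
move=> c u v.
set d := (msupp u `|` msupp v `|` msupp (c *: u + v))%fset.
rewrite (@Ew _ _ _ d); last by rewrite /d fsubsetUr.
rewrite (@Ew _ _ u d); last by rewrite /d -fsetUA fsubsetUl.
rewrite (@Ew _ _ v d); last by rewrite /d fsubsetU // fsubsetUr.
rewrite scaler_sumr -big_split /=; apply: eq_bigr => x _.
by rewrite mcoeffD mcoeffZ scalerDl scalerA.
Qed.

Lemma UZ (c : F) (k : K) : << c *g k >> = c *: (<< k >> : H).
Proof.
apply/malgP => k'; rewrite mcoeffZ !mcoeffU.
by case: eqP => _; rewrite ?mulr1 ?mulr0.
Qed.

Lemma E_U (V : lmodType F) (phi : K -> V) k : E phi << k >> = phi k.
Proof.
rewrite /E msuppU oner_eq0 big_seq_fset1 mcoeffUU scale1r //.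
Qed.

Lemma decomp (a : H) : a = E (fun x => << x >>) a.
Proof.
rewrite {1}(monalgE a) /E; apply: eq_bigr => x _; exact: UZ.
Qed.

Lemma E_ext (V : lmodType F) (f : H -> V) a : lin f -> f a = E (fun x => f << x >>) a.
Proof. by move=> hf; rewrite {1}(decomp a) /E lin_sum. Qed.

Lemma lin_ext_eq (V : lmodType F) (f g : H -> V) :
  lin f -> lin g -> (forall k, f << k >> = g << k >>) -> forall a, f a = g a.
Proof.
move=> hf hg e a; rewrite (E_ext a hf) (E_ext a hg) /E.
by apply: eq_bigr => x _; rewrite e.
Qed.
End Lin.

Section Bil.
Variables (F : fieldType) (K K' : choiceType) (m : K -> K -> K').

Definition bil (a b : {malg F[K]}) : {malg F[K']} :=
  \sum_(x <- msupp a) \sum_(y <- msupp b) << a@_x * b@_y *g m x y >>.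

Lemma bil_l a b : bil a b = E (fun x => E (fun y => << m x y >>) b) a.
Proof.
rewrite /bil /E; apply: eq_bigr => x _; rewrite scaler_sumr.
by apply: eq_bigr => y _; rewrite UZ scalerA.
Qed.

Lemma bil_r a b : bil a b = E (fun y => E (fun x => << m x y >>) a) b.
Proof.
rewrite /bil /E exchange_big; apply: eq_bigr => y _; rewrite scaler_sumr.
by apply: eq_bigr => x _; rewrite UZ scalerA mulrC.
Qed.

Lemma lin_bil_l b : lin (fun a => bil a b).
Proof. by move=> c u v; rewrite !bil_l lin_E. Qed.

Lemma lin_bil_r a : lin (bil a).
Proof. by move=> c u v; rewrite !bil_r lin_E. Qed.

Lemma bil_U x y : bil << x >> << y >> = << m x y >>.
Proof. by rewrite bil_l !E_U. Qed.
End Bil.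

Section Main.
Variables (F : fieldType) (G : choiceType).
Variables (mul : G -> G -> G) (one : G) (inv : G -> G).

Lemma galg_mulE (a b : {malg F[G]}) : galg_mul (F:=F) mul a b = bil mul a b.
Proof. by []. Qed.

Lemma gtensE (a b : {malg F[G]}) : gtens a b = bil (fun x y : G => (x, y)) a b.
Proof. by []. Qed.

Lemma lin_extE f (a : {malg F[G]}) : lin_ext f a = E (fun x => << f x >>) a.
Proof. by rewrite /lin_ext /E; apply: eq_bigr => x _; rewrite UZ. Qed.

Lemma comulE (a : {malg F[G]}) : galg_comul a = E (fun x => << (x, x) >>) a.
Proof. by rewrite /galg_comul /E; apply: eq_bigr => x _; rewrite UZ. Qed.

Lemma counitE (a : {malg F[G]}) : galg_counit a = E (fun _ => (1 : F^o)) a.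
Proof. by rewrite /galg_counit /E; apply: eq_bigr => x _; rewrite /GRing.scale /= mulr1. Qed.

Lemma lin_lin_ext (f : G -> G) : lin (lin_ext (F:=F) f).
Proof. by move=> c u v; rewrite !lin_extE lin_E. Qed.

Lemma lin_ext_U f (k : G) : lin_ext (F:=F) f << k >> = << f k >>.
Proof. by rewrite lin_extE E_U. Qed.

Lemma lin_comul : lin (galg_comul (F:=F) (G:=G)).
Proof. by move=> c u v; rewrite !comulE lin_E. Qed.

Lemma lin_counit : lin (fun a => galg_counit (F:=F) (G:=G) a : F^o).
Proof. by move=> c u v; rewrite !counitE lin_E. Qed.

Lemma lin_tens_lift (V : lmodType F) phi : lin (tens_lift (G:=G) (V:=V) phi).
Proof. by move=> c u v; rewrite /tens_lift -!/(E _ _) lin_E. Qed.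

Lemma tens_lift_U (V : lmodType F) phi (p : G * G) :
  tens_lift (G:=G) (V:=V) phi << p >> = phi (gbase F p.1) (gbase F p.2).
Proof. by rewrite /tens_lift -/(E _ _) E_U. Qed.

Lemma coalg_lin_ext (f : G -> G) : coalg_hom (lin_ext (F:=F) f).
Proof.
split.
- move=> c u v; exact: lin_lin_ext.
- apply: lin_ext_eq.
  + exact: (lin_comp lin_comul (lin_lin_ext f)).
  + exact: (lin_comp (lin_tens_lift _) lin_comul).
  move=> k /=; rewrite lin_ext_U !comulE !E_U tens_lift_U /gbase /=.
  by rewrite !lin_ext_U gtensE bil_U.
- apply: (lin_ext_eq (V := F^o)).
  + exact: (lin_comp lin_counit (lin_lin_ext f)).
  + exact: lin_counit.
  by move=> k /=; rewrite lin_ext_U !counitE !E_U.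
Qed.
End Main.

Section Grp.
Variables (G : Type) (mul : G -> G -> G) (one : G) (inv : G -> G)
  (mulA : associative mul) (mul1g : left_id one mul) (mulg1 : right_id one mul)
  (mulVg : left_inverse one inv mul) (mulgV : right_inverse one inv mul).

Lemma inv_uniq a b : mul a b = one -> b = inv a.
Proof. by move=> h; rewrite -[b]mul1g -(mulVg a) -mulA h mulg1. Qed.

Lemma invK x : inv (inv x) = x.
Proof. by apply/esym/inv_uniq; rewrite mulVg. Qed.

Lemma inv1 : inv one = one.
Proof. by apply/esym/inv_uniq; rewrite mul1g. Qed.

Lemma invM x y : inv (mul x y) = mul (inv y) (inv x).
Proof.
apply/esym/inv_uniq; rewrite -mulA (mulA y) mulgV mul1g mulgV //.
Qed.
End Grp.

Lemma lin_mul_l (F : fieldType) (G : choiceType) (mul : G -> G -> G) (b : {malg F[G]}) :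
  lin (fun a => galg_mul mul a b).
Proof. exact: lin_bil_l. Qed.

Lemma lin_mul_r (F : fieldType) (G : choiceType) (mul : G -> G -> G) (a : {malg F[G]}) :
  lin (galg_mul mul a).
Proof. exact: lin_bil_r. Qed.



Lemma lin_B_tl (F : fieldType) (G : choiceType) (f : G -> G)
  (phi : {malg F[G]} -> {malg F[G]} -> {malg F[G]}) :
  lin (fun a => lin_ext (F:=F) f (tens_lift phi (galg_comul a))).
Proof.
move=> c u v; rewrite lin_comul lin_tens_lift lin_lin_ext //.
Qed.

Theorem mainTheorem2 (F : fieldType) (charF0 : [pchar F] =i pred0)
  (G : choiceType) (mul : G -> G -> G) (one : G) (inv : G -> G)
  (mulA : associative mul) (mul1g : left_id one mul) (mulg1 : right_id one mul)
  (mulVg : left_inverse one inv mul) (mulgV : right_inverse one inv mul)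
  (B1 B2 : G -> G)
  (hRB : RB_system_group mul B1 B2) (hB1 : B1 one = one) (hB2 : B2 one = one) :
  RB_system_Hopf (F:=F) mul one inv
    (lin_ext (F:=F) B1) (lin_ext (F:=F) (fun g => inv (B2 g))).
Proof.
case: hRB => h1 h2.
split.
- exact: coalg_lin_ext.
- exact: coalg_lin_ext.
- by rewrite /galg_one !lin_ext_U hB1 hB2 (inv1 mulA mul1g mulg1 mulVg).
- move=> a b; move: a; apply: lin_ext_eq.
  + exact: (lin_comp (lin_mul_l _ _) (lin_lin_ext _)).
  + exact: lin_B_tl.
  move=> k /=; rewrite comulE E_U tens_lift_U /gbase /= /galg_antipode !lin_ext_U.
  move: b; apply: lin_ext_eq.
  + exact: (lin_comp (lin_mul_r _ _) (lin_lin_ext _)).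
  + exact: (lin_comp (lin_lin_ext _) (lin_comp (lin_mul_l _ _) (lin_mul_r _ _))).
  move=> h /=; rewrite !lin_ext_U !galg_mulE !bil_U lin_ext_U.
  by rewrite (invK mulA mul1g mulg1 mulVg) h1.
- move=> a b; move: a; apply: lin_ext_eq.
  + exact: (lin_comp (lin_mul_l _ _) (lin_lin_ext _)).
  + exact: lin_B_tl.
  move=> k /=; rewrite comulE E_U tens_lift_U /gbase /= /galg_antipode !lin_ext_U.
  move: b; apply: lin_ext_eq.
  + exact: (lin_comp (lin_mul_r _ _) (lin_lin_ext _)).
  + exact: (lin_comp (lin_lin_ext _) (lin_comp (lin_mul_l _ _) (lin_mul_r _ _))).
  move=> h /=; rewrite !lin_ext_U !galg_mulE !bil_U lin_ext_U.
  by rewrite (invK mulA mul1g mulg1 mulVg) -h2 (invM mulA mul1g mulg1 mulVg mulgV).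
Qed.
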